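(* Let $F$ be the elementary cellular automaton with rule number 32. For every nonempty finite word $u\in\{0,1\}^*$, the deterministic communication complexity of $\textsc{SInv}_{F,u}$ restricted to inputs of length $n$ is bounded by a constant independent of $n$.
   Context: An elementary cellular automaton (ECA) with rule number $N\in\{0,\dots,255\}$ is the map $F:\{0,1\}^{\mathbb Z}\to\{0,1\}^{\mathbb Z}$ given by $F(x)_i=f(x_{i-1},x_i,x_{i+1})$. Here the local rule $f:\{0,1\}^3\to\{0,1\}$ is determined by $N=\sum_{a,b,c\in\{0,1\}}2^{4a+2b+c}f(a,b,c)$. For a nonempty finite word $u$, $p_u\in\{0,1\}^{\mathbb Z}$ is defined by $(p_u)_i=u_{i\bmod |u|}$. For a finite word $x$, $p_u[x]$ is the configuration equal to $x$ on positions $0,\dots,|x|-1$ and to $p_u$ elsewhere. $\textsc{SInv}_{F,u}$ is the decision problem: on input a finite word $x$, decide whether there is an integer $w$ such that for all $t\ge0$ the set of positions where $F^t(p_u)$ and $F^t(p_u[x])$ differ is contained in an interval of length $w$. For each $n$, it is regarded as a function $\{0,1\}^n\to\{0,1\}$. For a function $g:X\times Y\to Z$, $D(g)$ is the minimal depth of a deterministic two-party protocol computing $g$. In such a protocol, Alice knows $x$ and Bob knows $y$. The protocol is a binary tree: each internal node is labelled by a function of Alice's input only or of Bob's input only, with values in $\{\text{left},\text{right}\}$, and each leaf is labelled by an output value. For $g:\{0,1\}^m\to Z$, set $D(g)=\max_{0\le i<m}D(g_i)$, where $g_i:\{0,1\}^i\times\{0,1\}^{m-i}\to Z$ is $g_i(x,y)=g(xy)$.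 *)

(* Defs.v *)
From Stdlib Require Import ZArith List Arith Bool.
Import ListNotations.
Open Scope Z_scope.

(* Configurations in {0,1}^Z, with 0/1 encoded as false/true. *)
Definition config := Z -> bool.

Definition b2n (b : bool) : nat := if b then 1%nat else 0%nat.

Definition local_rule (N : nat) (a b c : bool) : bool :=
  Nat.testbit N (4 * b2n a + 2 * b2n b + b2n c)%nat.

Definition eca (N : nat) (x : config) : config :=
  fun i => local_rule N (x (i - 1)) (x i) (x (i + 1)).

Fixpoint iterF (N : nat) (t : nat) (x : config) : config :=
  match t with
  | O => x
  | S t' => eca N (iterF N t' x)
  end.

Definition periodic (u : list bool) : config :=
  fun i => nth (Z.to_nat (i mod Z.of_nat (length u))) u false.

Definition patch (u x : list bool) : config :=
  fun i => if andb (0 <=? i) (i <? Z.of_nat (length x))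
           then nth (Z.to_nat i) x false
           else periodic u i.

Definition SInv (N : nat) (u x : list bool) : Prop :=
  exists w : Z, forall t : nat, exists a : Z, forall i : Z,
    iterF N t (periodic u) i <> iterF N t (patch u x) i -> a <= i < a + w.

(* Deterministic two-party protocols: binary trees whose internal nodes are
   labelled by a function of Alice's input only or of Bob's input only,
   with values in {left,right} (false = left, true = right), and leaves
   labelled by an output value. *)
Inductive protocol (X Y Z : Type) : Type :=
| Leaf : Z -> protocol X Y Z
| NodeA : (X -> bool) -> protocol X Y Z -> protocol X Y Z -> protocol X Y Z
| NodeB : (Y -> bool) -> protocol X Y Z -> protocol X Y Z -> protocol X Y Z.

Arguments Leaf {X Y Z} _.
Arguments NodeA {X Y Z} _ _ _.
Arguments NodeB {X Y Z} _ _ _.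

Fixpoint run {X Y Z : Type} (p : protocol X Y Z) (x : X) (y : Y) : Z :=
  match p with
  | Leaf z => z
  | NodeA f l r => if f x then run r x y else run l x y
  | NodeB g l r => if g y then run r x y else run l x y
  end.

Fixpoint depth {X Y Z : Type} (p : protocol X Y Z) : nat :=
  match p with
  | Leaf _ => 0
  | NodeA _ l r => S (Nat.max (depth l) (depth r))
  | NodeB _ l r => S (Nat.max (depth l) (depth r))
  end.

(* D(SInv_{F,u} on {0,1}^n) <= C, i.e. for every split point 0 <= i < n,
   the function g_i(x,y) = SInv(xy) on {0,1}^i x {0,1}^(n-i) is computed by
   a protocol of depth <= C. *)
Definition SInv_CC_le (N : nat) (u : list bool) (n C : nat) : Prop :=
  forall i : nat, (i < n)%nat ->
    exists p : protocol (list bool) (list bool) bool,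
      (depth p <= C)%nat /\
      forall x y : list bool, length x = i -> length y = (n - i)%nat ->
        (run p x y = true <-> SInv N u (x ++ y)).

(* Main.v *)
Require Import Defs.
From Stdlib Require Import ZArith List Arith Lia Bool Classical.
Import ListNotations.
Open Scope Z_scope.

Lemma lr32 a b c : local_rule 32 a b c = a && negb b && c.
Proof. destruct a, b, c; reflexivity. Qed.

Lemma eca32 x i : eca 32 x i = x (i-1) && negb (x i) && x (i+1).
Proof. unfold eca; apply lr32. Qed.

Lemma loc : forall t x y i,
  (forall j, i - Z.of_nat t <= j <= i + Z.of_nat t -> x j = y j) ->
  iterF 32 t x i = iterF 32 t y i.
Proof.
  induction t; intros x y i H; simpl.
  - apply H; lia.
  - rewrite !eca32. rewrite (IHt x y (i-1)), (IHt x y i), (IHt x y (i+1));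
      auto; intros j Hj; apply H; lia.
Qed.

Lemma fwd : forall t y i, iterF 32 t y i = true ->
  y (i + Z.of_nat t) = true /\
  forall j, i - Z.of_nat t <= j < i + Z.of_nat t -> y j <> y (j+1).
Proof.
  induction t; intros y i H.
  - simpl in H. split; [replace (i + Z.of_nat 0) with i by lia; auto|]. intros; lia.
  - simpl in H. rewrite eca32 in H.
    apply andb_prop in H as [H H3]. apply andb_prop in H as [H1 H2].
    apply negb_true_iff in H2.
    destruct (IHt y _ H1) as [A1 B1]. destruct (IHt y _ H3) as [A3 B3].
    split.
    + replace (i + Z.of_nat (S t)) with (i + 1 + Z.of_nat t) by lia. auto.
    + intros j Hj.
      destruct (Z_le_gt_dec j (i - 1 + Z.of_nat t - 1)) as [h|h].
      { apply B1; lia. }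
      destruct (Z_le_gt_dec (i + 1 - Z.of_nat t) j) as [h'|h'].
      { apply B3; lia. }
      assert (t = 0%nat) by lia. subst t. simpl in *.
      replace (i - 1 + 0) with (i-1) in A1 by lia.
      replace (i + 1 + 0) with (i+1) in A3 by lia.
      assert (j = i - 1 \/ j = i) as [->| ->] by lia.
      * replace (i-1+1) with i by lia. rewrite A1, H2. discriminate.
      * rewrite A3, H2. discriminate.
Qed.

Lemma per_shift u j q : periodic u (j + q * Z.of_nat (length u)) = periodic u j.
Proof. unfold periodic. rewrite Z_mod_plus_full. reflexivity. Qed.

Lemma patch_out u z j : (j < 0 \/ Z.of_nat (length z) <= j) ->
  patch u z j = periodic u j.
Proof.
  intros H. unfold patch.
  destruct (0 <=? j) eqn:E1; destruct (j <? Z.of_nat (length z)) eqn:E2; simpl; auto.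
  apply Z.leb_le in E1. apply Z.ltb_lt in E2. lia.
Qed.

Lemma patch_in u z (j : nat) : (j < length z)%nat ->
  patch u z (Z.of_nat j) = nth j z false.
Proof.
  intros H. unfold patch.
  replace (0 <=? Z.of_nat j) with true by (symmetry; apply Z.leb_le; lia).
  replace (Z.of_nat j <? Z.of_nat (length z)) with true by (symmetry; apply Z.ltb_lt; lia).
  simpl. rewrite Nat2Z.id. auto.
Qed.

Lemma zeroA : forall u y L t i k, u <> nil ->
  periodic u k = periodic u (k+1) ->
  (forall j, (j < 0 \/ L <= j) -> y j = periodic u j) -> 0 <= L ->
  Z.of_nat t >= L + 2 * Z.of_nat (length u) + 2 ->
  iterF 32 t y i = false.
Proof.
  intros u y L t i k Hu Hk Hy HL Ht.
  set (m := Z.of_nat (length u)) in *.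
  assert (Hm : m > 0) by (destruct u; [congruence|simpl in m; unfold m; lia]).
  destruct (iterF 32 t y i) eqn:E; auto.
  destruct (fwd _ _ _ E) as [_ B].
  set (T := Z.of_nat t) in *.
  assert (exists lo, i - T <= lo /\ lo + m <= i + T /\
            (lo + m <= -1 \/ L <= lo)) as [lo [Hl1 [Hl2 Hl3]]].
  { destruct (Z_le_gt_dec (i - T + m + 1) 0).
    - exists (i - T). lia.
    - exists (i + T - m). lia. }
  pose proof (Z.div_mod (k - lo) m ltac:(lia)) as Hdm.
  pose proof (Z.mod_pos_bound (k - lo) m ltac:(lia)) as Hb.
  set (q := (k - lo) / m) in *. set (r := (k - lo) mod m) in *.
  set (j0 := k + (- q) * m).
  assert (lo <= j0 < lo + m) by (unfold j0; lia).
  exfalso; apply (B j0); [lia|].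
  rewrite (Hy j0) by lia. rewrite (Hy (j0+1)) by lia.
  unfold j0. rewrite per_shift.
  replace (k + - q * m + 1) with (k + 1 + (-q) * m) by lia. rewrite per_shift. auto.
Qed.

Lemma sinvA u z k : u <> nil -> periodic u k = periodic u (k+1) -> SInv 32 u z.
Proof.
  intros Hu Hk.
  set (L := Z.of_nat (length z)).
  set (m := Z.of_nat (length u)).
  set (TT := Z.to_nat (L + 2*m + 2)).
  exists (L + 2 * Z.of_nat TT + 2). intros t. exists (- Z.of_nat TT - 1).
  intros i Hd.
  destruct (lt_dec t TT) as [Hlt|Hge].
  - destruct (Z_lt_le_dec i (- Z.of_nat t)) as [h|h].
    { exfalso. apply Hd. apply loc. intros j Hj. rewrite patch_out; auto. lia. }
    destruct (Z_lt_le_dec (L - 1 + Z.of_nat t) i) as [h'|h'].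
    { exfalso. apply Hd. apply loc. intros j Hj. rewrite patch_out; auto.
      unfold L in *. lia. }
    lia.
  - exfalso. apply Hd.
    assert (HL : 0 <= L) by (unfold L; lia).
    rewrite (zeroA u (periodic u) L t i k), (zeroA u (patch u z) L t i k); auto.
    + intros j Hj. apply patch_out. unfold L in Hj. lia.
    + unfold TT in Hge. fold m. lia.
    + unfold TT in Hge. fold m. lia.
Qed.

Lemma shiftB u (Hall : forall j, periodic u j <> periodic u (j+1)) :
  forall t i, iterF 32 t (periodic u) i = periodic u (i + Z.of_nat t).
Proof.
  set (p := periodic u) in *.
  induction t; intros i; cbn [iterF].
  - f_equal; lia.
  - rewrite eca32, !IHt.
    pose proof (Hall (i - 1 + Z.of_nat t)) as H1.
    replace (i - 1 + Z.of_nat t + 1) with (i + Z.of_nat t) in H1 by lia.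
    pose proof (Hall (i + Z.of_nat t)) as H2.
    replace (i + 1 + Z.of_nat t) with (i + Z.of_nat t + 1) by lia.
    replace (i + Z.of_nat (S t)) with (i + Z.of_nat t + 1) by lia.
    destruct (p (i - 1 + Z.of_nat t)), (p (i + Z.of_nat t)), (p (i + Z.of_nat t + 1));
      simpl; congruence.
Qed.

Lemma constg (g : Z -> bool) a : forall n : nat,
  (forall k, a <= k < a + Z.of_nat n -> g (k+1) = g k) -> g (a + Z.of_nat n) = g a.
Proof.
  induction n; intros H.
  - f_equal; lia.
  - replace (a + Z.of_nat (S n)) with (a + Z.of_nat n + 1) by lia.
    rewrite H by lia. apply IHn. intros k Hk. apply H. lia.
Qed.

Lemma zeroB u z d t i (Hall : forall j, periodic u j <> periodic u (j+1)) :
  0 <= d < Z.of_nat (length z) -> patch u z d <> periodic u d ->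
  Z.of_nat t >= Z.of_nat (length z) ->
  d - Z.of_nat t <= i <= d + Z.of_nat t ->
  iterF 32 t (patch u z) i = false.
Proof.
  intros Hd Hpd Ht Hi.
  destruct (iterF 32 t (patch u z) i) eqn:E; auto.
  destruct (fwd _ _ _ E) as [_ B].
  set (T := Z.of_nat t) in *.
  set (g := fun j => xorb (patch u z j) (periodic u j)).
  assert (Hg : forall n : nat, i - T + Z.of_nat n <= i + T ->
     g (i - T + Z.of_nat n) = g (i - T)).
  { intros n Hn. apply constg. intros k Hk. unfold g.
    pose proof (B k ltac:(lia)) as H1. pose proof (Hall k) as H2.
    destruct (patch u z k), (patch u z (k+1)), (periodic u k), (periodic u (k+1));
      simpl; congruence. }
  assert (exists e, i - T <= e <= i + T /\ (e < 0 \/ Z.of_nat (length z) <= e))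
    as [e [He1 He2]].
  { destruct (Z_lt_le_dec (i - T) 0); [exists (i - T); lia | exists (i + T); lia]. }
  assert (g e = false).
  { unfold g. rewrite patch_out by auto. destruct (periodic u e); reflexivity. }
  assert (g d = false).
  { pose proof (Hg (Z.to_nat (d - (i - T))) ltac:(lia)) as G1.
    pose proof (Hg (Z.to_nat (e - (i - T))) ltac:(lia)) as G2.
    replace (i - T + Z.of_nat (Z.to_nat (d - (i - T)))) with d in G1 by lia.
    replace (i - T + Z.of_nat (Z.to_nat (e - (i - T)))) with e in G2 by lia.
    congruence. }
  unfold g in H0. exfalso; apply Hpd.
  destruct (patch u z d), (periodic u d); simpl in H0; congruence.
Qed.

Lemma notSInvB u z d (Hall : forall j, periodic u j <> periodic u (j+1)) :
  0 <= d < Z.of_nat (length z) -> patch u z d <> periodic u d -> ~ SInv 32 u z.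
Proof.
  intros Hd Hpd [w Hw].
  set (L := Z.of_nat (length z)) in *.
  set (t := (Z.to_nat (Z.abs w) + Z.to_nat L + 2)%nat).
  set (T := Z.of_nat t).
  destruct (Hw t) as [a Ha].
  assert (Z0 : forall i, d - T <= i <= d + T -> iterF 32 t (patch u z) i = false).
  { intros i Hi. apply (zeroB u z d); auto; unfold T, t, L in *; lia. }
  assert (Hdiff : forall i, d - T <= i <= d + T -> periodic u (i + T) = true ->
            a <= i < a + w).
  { intros i Hi Hp. apply Ha. rewrite Z0 by auto. rewrite shiftB by auto.
    fold T. rewrite Hp. discriminate. }
  assert (exists i1, d - T <= i1 <= d - T + 1 /\ periodic u (i1 + T) = true)
    as [i1 [Hi1 P1]].
  { pose proof (Hall (d - T + T)) as H.
    destruct (periodic u (d - T + T)) eqn:E.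
    - exists (d - T). split; [lia|auto].
    - exists (d - T + 1). split; [lia|].
      replace (d - T + 1 + T) with (d - T + T + 1) by lia.
      destruct (periodic u (d - T + T + 1)); congruence. }
  assert (exists i2, d + T - 1 <= i2 <= d + T /\ periodic u (i2 + T) = true)
    as [i2 [Hi2 P2]].
  { pose proof (Hall (d + T - 1 + T)) as H.
    destruct (periodic u (d + T - 1 + T)) eqn:E.
    - exists (d + T - 1). split; [lia|auto].
    - exists (d + T). split; [lia|].
      replace (d + T + T) with (d + T - 1 + T + 1) by lia.
      destruct (periodic u (d + T - 1 + T + 1)); congruence. }
  pose proof (Hdiff i1 ltac:(unfold T, t in *; lia) P1).
  pose proof (Hdiff i2 ltac:(unfold T, t in *; lia) P2).
  unfold T, t in *. lia.
Qed.

Fixpoint okb (u s : list bool) (off : nat) : bool :=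
  match s with
  | nil => true
  | b :: s' => Bool.eqb b (periodic u (Z.of_nat off)) && okb u s' (S off)
  end.

Lemma okb_app u x y off : okb u (x ++ y) off = okb u x off && okb u y (off + length x).
Proof.
  revert off; induction x; intros off; simpl.
  - rewrite Nat.add_0_r; auto.
  - rewrite IHx, andb_assoc. replace (S off + length x)%nat with (off + S (length x))%nat by lia.
    auto.
Qed.

Lemma okb_true u s : forall off, okb u s off = true ->
  forall j, (j < length s)%nat -> nth j s false = periodic u (Z.of_nat (off + j)).
Proof.
  induction s; intros off H j Hj; simpl in *; [lia|].
  apply andb_prop in H as [H1 H2]. destruct j.
  - apply Bool.eqb_prop in H1. rewrite Nat.add_0_r; auto.
  - rewrite (IHs _ H2 j) by lia. f_equal. lia.
Qed.

Lemma okb_false u s : forall off, okb u s off = false ->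
  exists j, (j < length s)%nat /\ nth j s false <> periodic u (Z.of_nat (off + j)).
Proof.
  induction s; intros off H; simpl in *; [discriminate|].
  apply andb_false_iff in H as [H|H].
  - exists 0%nat. split; [lia|]. rewrite Nat.add_0_r. intros E. rewrite E in H.
    rewrite eqb_reflx in H. discriminate.
  - destruct (IHs _ H) as [j [Hj Hn]]. exists (S j). split; [lia|].
    replace (off + S j)%nat with (S off + j)%nat by lia. auto.
Qed.

Lemma sinvB u z (Hall : forall j, periodic u j <> periodic u (j+1)) :
  SInv 32 u z <-> okb u z 0 = true.
Proof.
  split.
  - intros HS. destruct (okb u z 0) eqn:E; auto. exfalso.
    destruct (okb_false _ _ _ E) as [j [Hj Hn]]. simpl in Hn.
    apply (notSInvB u z (Z.of_nat j) Hall); auto; [lia|].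
    rewrite patch_in; auto.
  - intros H. exists 0. intros t. exists 0. intros i Hd. exfalso. apply Hd.
    apply loc. intros j _. unfold patch.
    destruct (0 <=? j) eqn:E1; destruct (j <? Z.of_nat (length z)) eqn:E2; simpl; auto.
    apply Z.leb_le in E1. apply Z.ltb_lt in E2.
    rewrite (okb_true _ _ _ H (Z.to_nat j)) by lia. f_equal. lia.
Qed.

Theorem mainTheorem10 :
  forall u : list bool, u <> nil ->
    exists C : nat, forall n : nat, SInv_CC_le 32 u n C.
Proof.
  intros u Hu. exists 2%nat. intros n i _.
  destruct (classic (exists k, periodic u k = periodic u (k+1))) as [[k Hk]|Hn].
  - exists (Leaf true). split; [simpl; lia|].
    intros x y _ _. simpl. split; intros _; [apply (sinvA u _ k); auto|reflexivity].
  - assert (Hall : forall j, periodic u j <> periodic u (j+1)).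
    { intros j E. apply Hn. exists j. auto. }
    exists (NodeA (fun x => okb u x 0) (Leaf false)
              (NodeB (fun y => okb u y i) (Leaf false) (Leaf true))).
    split; [simpl; lia|].
    intros x y Hx _. rewrite sinvB by auto. rewrite okb_app, Hx. simpl.
    destruct (okb u x 0), (okb u y i); simpl; split; congruence.
Qed.
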